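(* Let $(A_*,\partial,\ell)$ be an ascending chain complex over a field $\kappa$ with $H_k(A_* )=0$ for all $k$, and suppose each $(A_k,\ell|_{A_k})$ satisfies the best approximation property. Then there are index sets $\mathcal{I}_k$ and, for each $k$, an $\ell$-orthogonal basis $\{x^k_i: i\in\mathcal{I}_{k+1}\}\cup\{y^k_j:j\in\mathcal{I}_k\}$ of $A_k$ such that $\partial y^{k+1}_i=x^k_i$ for every $i\in\mathcal{I}_{k+1}$.
   Context: An ascending chain complex over $\kappa$ is a triple $(C_*,\partial,\ell)$ where $(C_*=\bigoplus_{k\in\mathbb{Z}}C_k,\partial)$ is a chain complex of $\kappa$-vector spaces and $\ell\colon C_*\to\mathbb{R}\cup\{-\infty\}$ satisfies: $\ell(x)=-\infty$ iff $x=0$; $\ell(\sum_i c_ix_i)\le\max\{\ell(x_i): c_i\neq 0\}$, with equality if the $x_i$ lie in pairwise distinct degrees; and $\ell(\partial x)\le\ell(x)$. A subset $S\subset V\setminus\{0\}$ is $\ell$-orthogonal if $\ell(\sum c_iv_i)=\max\{\ell(v_i):c_i\neq0\}$ for all finitely many distinct $v_i\in S$, $c_i\in\kappa$. A filtered vector space $(V,\ell)$ satisfies the best approximation property if for every proper subspace $W\subsetneq V$ and every $v\in V\setminus W$ there is $w_0\in W$ with $\ell(v-w_0)\le\ell(v-w)$ for all $w\in W$. *)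

(* Defs.v *)
From HB Require Import structures.
From mathcomp Require Import all_boot all_order all_algebra.
From mathcomp Require Import constructive_ereal reals.
From Stdlib Require List.
Set Implicit Arguments. Unset Strict Implicit. Unset Printing Implicit Defensive.
Import Order.TTheory GRing.Theory Num.Theory.
Local Open Scope ring_scope.
Local Open Scope ereal_scope.

Section Defs.
Variables (R : realType) (K : fieldType).

Definition emax_seq (T : Type) (s : seq T) (P : T -> bool) (f : T -> \bar R) : \bar R :=
  \big[Order.max/-oo]_(p <- s | P p) f p.

Definition filtration_fun (V : lmodType K) (l : V -> \bar R) : Prop :=
  (forall x : V, l x != +oo) /\
  (forall x : V, l x = -oo <-> x = 0%R) /\
  (forall s : seq (K * V),
      l (\sum_(p <- s) p.1 *: p.2)%R <= emax_seq s (fun p => p.1 != 0%R) (fun p => l p.2)).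

Definition ascending_chain_complex (A : int -> lmodType K)
    (d : forall k : int, {linear A (k + 1)%R -> A k})
    (l : forall k : int, A k -> \bar R) : Prop :=
  (forall k (x : A (k + 1 + 1)%R), d k (d (k + 1)%R x) = 0%R) /\
  (forall k, filtration_fun (l k)) /\
  (forall k (x : A (k + 1)%R), l k (d k x) <= l (k + 1)%R x).

Definition acyclic (A : int -> lmodType K)
    (d : forall k : int, {linear A (k + 1)%R -> A k}) : Prop :=
  forall k (x : A (k + 1)%R), d k x = 0%R ->
    exists y : A (k + 1 + 1)%R, d (k + 1)%R y = x.

Definition subspace (V : lmodType K) (W : V -> Prop) : Prop :=
  W 0%R /\ (forall u v, W u -> W v -> W (u + v)%R) /\
  (forall (c : K) v, W v -> W (c *: v)%R).

Definition best_approximation (V : lmodType K) (l : V -> \bar R) : Prop :=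
  forall W : V -> Prop, subspace W -> (exists v, ~ W v) ->
  forall v, ~ W v ->
  exists2 w0, W w0 & forall w, W w -> l (v - w0)%R <= l (v - w)%R.

Definition l_orthogonal (V : lmodType K) (l : V -> \bar R) (J : Type) (b : J -> V) : Prop :=
  (forall i j, b i = b j -> i = j) /\
  (forall i, b i != 0%R) /\
  (forall s : seq (J * K), List.NoDup (map fst s) ->
     l (\sum_(p <- s) p.2 *: b p.1)%R = emax_seq s (fun p => p.2 != 0%R) (fun p => l (b p.1))).

Definition is_basis (V : lmodType K) (J : Type) (b : J -> V) : Prop :=
  (forall i j, b i = b j -> i = j) /\
  (forall s : seq (J * K), List.NoDup (map fst s) ->
     (\sum_(p <- s) p.2 *: b p.1)%R = 0%R -> forall p, List.In p s -> p.2 = 0%R) /\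
  (forall v : V, exists s : seq (J * K), v = (\sum_(p <- s) p.2 *: b p.1)%R).

End Defs.

(* Main.v *)
Require Import Defs.
From HB Require Import structures.
From mathcomp Require Import all_boot all_order all_algebra.
From mathcomp Require Import constructive_ereal reals.
From mathcomp Require Import classical_sets boolp.
From Stdlib Require List.
From Stdlib Require Import ProofIrrelevance.
Set Implicit Arguments. Unset Strict Implicit. Unset Printing Implicit Defensive.
Import Order.TTheory GRing.Theory Num.Theory.
Local Open Scope ring_scope.

Local Open Scope ereal_scope.

Section Basic.
Variables (R : realType) (K : fieldType).

Lemma emax_cons (T : Type) (p : T) s (P : T -> bool) (f : T -> \bar R) :
  emax_seq (p :: s) P f = if P p then Order.max (f p) (emax_seq s P f) else emax_seq s P f.
Proof. by rewrite /emax_seq big_cons. Qed.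

Lemma emax_nil (T : Type) (P : T -> bool) (f : T -> \bar R) : emax_seq [::] P f = -oo.
Proof. by rewrite /emax_seq big_nil. Qed.

Lemma emax_ub (T : Type) s (P : T -> bool) (f : T -> \bar R) p :
  List.In p s -> P p -> f p <= emax_seq s P f.
Proof.
elim: s => //= q s IH [->|/IH H] Pp; rewrite emax_cons.
  by rewrite Pp le_max lexx.
by case: ifP => _; rewrite ?le_max H ?orbT.
Qed.

Lemma emax_le (T : Type) s (P : T -> bool) (f : T -> \bar R) m :
  (forall p, List.In p s -> P p -> f p <= m) -> emax_seq s P f <= m.
Proof.
elim: s => [|q s IH] H; first by rewrite emax_nil leNye.
rewrite emax_cons; have H' : emax_seq s P f <= m by apply: IH => p Hp; apply: H; right.
case: ifP => // Pq; rewrite ge_max H' andbT; apply: H => //; by left.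
Qed.

Lemma emax_att (T : Type) s (P : T -> bool) (f : T -> \bar R) :
  emax_seq s P f = -oo \/ exists2 p, List.In p s /\ P p & f p = emax_seq s P f.
Proof.
elim: s => [|q s [IH|[p [Hp Pp] E]]]; first by left; rewrite emax_nil.
- rewrite emax_cons IH; case: ifP => Pq; last by left.
  right; exists q; first by split=> //; left.
  by rewrite max_l // leNye.
- rewrite emax_cons; case: ifP => Pq; last by right; exists p => //; split=> //; right.
  right; rewrite -E; case: (leP (f q) (f p)) => h.
    by exists p; [split=> //; right|].
  by exists q; [split=> //; left|].
Qed.


Section Filt.
Variable V : lmodType K.

Record ufilt (S : V -> Prop) (L : V -> \bar R) : Prop := UFilt {
  uf_add : forall x y, S x -> S y -> L (x + y)%R <= Order.max (L x) (L y);
  uf_scale : forall (c : K) x, S x -> L (c *: x)%R <= L x;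
  uf_zero : forall x, S x -> (L x = -oo <-> x = 0%R) }.

Lemma subspace_opp (S : V -> Prop) x : subspace S -> S x -> S (- x)%R.
Proof. by move=> [S0 [SD SZ]] Sx; rewrite -scaleN1r; apply: SZ. Qed.

Lemma subspace_sub (S : V -> Prop) x y : subspace S -> S x -> S y -> S (x - y)%R.
Proof. by move=> HS Sx Sy; have [S0 [SD SZ]] := HS; apply: SD => //; apply: subspace_opp. Qed.

Lemma subspace_sum (S : V -> Prop) (T : Type) (s : seq T) (P : T -> bool) (f : T -> V) :
  subspace S -> (forall p, List.In p s -> P p -> S (f p)) -> S (\sum_(p <- s | P p) f p)%R.
Proof.
move=> [S0 [SD SZ]]; elim: s => [|q s IH] H; first by rewrite big_nil.
rewrite big_cons; have H' : S (\sum_(p <- s | P p) f p)%R by apply: IH => p Hp; apply: H; right.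
by case: ifP => // Pq; apply: SD => //; apply: H => //; left.
Qed.

Variables (S : V -> Prop) (L : V -> \bar R).
Hypotheses (HS : subspace S) (HL : ufilt S L).

Lemma uf_scaleE (c : K) x : c != 0%R -> S x -> L (c *: x)%R = L x.
Proof.
move=> c0 Sx; apply/eqP; rewrite eq_le (uf_scale HL) //=.
rewrite -{1}(scale1r x) -(mulVf c0) -scalerA; apply: (uf_scale HL).
by case: HS => [_ [_ SZ]]; apply: SZ.
Qed.

Lemma uf_opp x : S x -> L (- x)%R = L x.
Proof. by move=> Sx; rewrite -scaleN1r uf_scaleE // oppr_eq0 oner_eq0. Qed.

Lemma uf_strict x y : S x -> S y -> L x < L y -> L (x + y)%R = L y.
Proof.
move=> Sx Sy lxy; apply/eqP; rewrite eq_le; apply/andP; split.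
  by apply: le_trans (uf_add HL Sx Sy) _; rewrite ge_max lexx andbT; exact: ltW.
have Sxy : S (x + y)%R by case: HS => [_ [SD _]]; apply: SD.
have := uf_add HL Sxy (subspace_opp HS Sx); rewrite addrC addKr uf_opp // => h.
rewrite leNgt; apply/negP => h2; move: h; rewrite leNgt gt_max h2 lxy.
by [].
Qed.

Lemma uf_0 : L 0%R = -oo.
Proof. by case: HS => [S0 _]; apply/(uf_zero HL S0). Qed.

Lemma uf_sum_le (T : Type) (s : seq T) (P : T -> bool) (f : T -> V) m :
  (forall p, List.In p s -> P p -> S (f p) /\ L (f p) <= m) ->
  L (\sum_(p <- s | P p) f p)%R <= m.
Proof.
elim: s => [|q s IH] H; first by rewrite big_nil uf_0 leNye.
have H' : forall p, List.In p s -> P p -> S (f p) /\ L (f p) <= m by move=> p Hp; apply: H; right.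
rewrite big_cons; case: ifP => Pq; last exact: IH.
have [Sq Lq] := H q (or_introl erefl) Pq.
apply: le_trans (uf_add HL Sq _) _.
  by apply: subspace_sum => // p Hp Pp; case: (H' p Hp Pp).
by rewrite ge_max Lq IH.
Qed.

Lemma uf_sum_lt (T : Type) (s : seq T) (P : T -> bool) (f : T -> V) m :
  -oo < m ->
  (forall p, List.In p s -> P p -> S (f p) /\ L (f p) < m) ->
  L (\sum_(p <- s | P p) f p)%R < m.
Proof.
move=> m0; elim: s => [|q s IH] H; first by rewrite big_nil uf_0.
have H' : forall p, List.In p s -> P p -> S (f p) /\ L (f p) < m by move=> p Hp; apply: H; right.
rewrite big_cons; case: ifP => Pq; last exact: IH.
have [Sq Lq] := H q (or_introl erefl) Pq.
apply: le_lt_trans (uf_add HL Sq _) _.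
  by apply: subspace_sum => // p Hp Pp; case: (H' p Hp Pp).
by rewrite gt_max Lq IH.
Qed.

End Filt.

Lemma ff_ufilt (V : lmodType K) (L : V -> \bar R) (S : V -> Prop) :
  filtration_fun L -> ufilt S L.
Proof.
move=> [_ [Z H]]; split.
- move=> x y _ _; have := H [:: (1%R, x); (1%R, y)].
  rewrite !emax_cons emax_nil !big_cons big_nil /= !scale1r addr0 oner_neq0.
  by rewrite (@max_l _ _ (L y) -oo) // leNye.
- move=> c x _; have := H [:: (c, x)].
  rewrite !emax_cons emax_nil !big_cons big_nil /= addr0.
  case: (eqVneq c 0%R) => [->|c0] /=.
    by rewrite scale0r => h; apply: le_trans h _; rewrite leNye.
  by rewrite (@max_l _ _ (L x) -oo) // leNye.
- by move=> x _; apply: Z.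
Qed.

End Basic.

Local Close Scope ereal_scope.

Lemma sum_delta (M : zmodType) n k (F : nat -> M) :
  (k < n)%N -> \sum_(i < n) (if (i : nat) == k then F i else 0) = F k.
Proof.
elim: n => [//|n IH] lt; rewrite big_ord_recr /=.
have [kn|nk] := ltnP k n; first by rewrite IH // (gtn_eqF kn) addr0.
have -> : k = n by apply/eqP; rewrite eqn_leq nk -ltnS lt.
rewrite eqxx big1 ?add0r // => i _; by rewrite (ltn_eqF (ltn_ord i)).
Qed.

Lemma sum_pad (M : zmodType) N Mx (F : nat -> M) :
  (N <= Mx)%N -> \sum_(i < Mx) (if ((i : nat) < N)%N then F i else 0) = \sum_(i < N) F i.
Proof. by move=> H; rewrite (big_ord_widen _ F H) [in RHS]big_mkcond. Qed.

Section WF.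
Variables (R : realType) (K : fieldType) (V : lmodType K) (S : V -> Prop) (L : V -> \bar R).

Definition bapprox := forall W : V -> Prop, subspace W -> (forall w, W w -> S w) ->
  forall v, S v -> ~ W v -> exists2 w0, W w0 & forall w, W w -> (L (v - w0) <= L (v - w))%E.

Hypotheses (HS : subspace S) (HL : ufilt S L) (HB : bapprox).

Section Seq.
Variable g : nat -> V.
Hypotheses (Sg : forall n, S (g n)) (Lg : forall n, (L (g n.+1) < L (g n))%E).

Definition comb N (a : nat -> K) := \sum_(i < N) a i *: g i.

Lemma S_comb N a : S (comb N a).
Proof.
have [S0 [SD SZ]] := HS.
rewrite /comb; elim: N => [|N IH]; first by rewrite big_ord0.
by rewrite big_ord_recr /=; apply: SD => //; apply: SZ.
Qed.

Lemma Lg_lt n m : (n < m)%N -> (L (g m) < L (g n))%E.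
Proof.
elim: m => [//|m IH]; rewrite ltnS leq_eqVlt => /orP[/eqP->//|nm].
exact: lt_trans (Lg m) (IH nm).
Qed.

Lemma comb_lt N a : (exists i, (i < N)%N /\ a i != 0) -> (L (g N) < L (comb N a))%E.
Proof.
have [S0 [SD SZ]] := HS.
elim: N => [[i [//]]|N IH] H; rewrite /comb big_ord_recr /= -/(comb N a).
case: (pselect (exists i, (i < N)%N /\ a i != 0)) => [H1|H1].
  have IH1 := IH H1.
  case: (eqVneq (a N) 0) => [->|aN].
    by rewrite scale0r addr0; apply: lt_trans IH1.
  have e : L (a N *: g N) = L (g N) by rewrite (uf_scaleE HS HL).
  rewrite addrC (uf_strict HS HL) ?e //; first exact: lt_trans IH1.
  - by apply: SZ.
  - by apply: S_comb.
have c0 : comb N a = 0.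
  apply: big1 => i _; case: (eqVneq (a i) 0) => [->|ai]; first by rewrite scale0r.
  by exfalso; apply: H1; exists i; split.
have aN : a N != 0.
  case: H => i [iN ai]; move: iN; rewrite ltnS leq_eqVlt => /orP[/eqP ei|iN].
    by rewrite -ei.
  by exfalso; apply: H1; exists i.
by rewrite c0 add0r (uf_scaleE HS HL).
Qed.

Lemma comb_pad N M a : (N <= M)%N -> comb M (fun i => if (i < N)%N then a i else 0) = comb N a.
Proof.
move=> H; rewrite /comb -(sum_pad (fun i => a i *: g i) H).
by apply: eq_bigr => i _; case: ifP => // _; rewrite scale0r.
Qed.

Lemma comb_key N a :
  g 0%N - comb N a = comb N.+1 (fun i => (i == 0%N)%:R - (if (i < N)%N then a i else 0)).
Proof.
rewrite /comb [RHS](eq_bigr (fun i : 'I_N.+1 => ((i : nat) == 0%N)%:R *: g i -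
   (if (i < N)%N then a i else 0) *: g i)); last by move=> i _; rewrite scalerBl.
rewrite sumrB; have := comb_pad a (leqnSn N); rewrite /comb => ->.
rewrite -(@sum_delta _ N.+1 0%N g) //; congr (_ - _).
by apply: eq_bigr => i _; case: eqP => _; rewrite ?scale1r ?scale0r.
Qed.

Lemma sum_key N (a : nat -> K) :
  \sum_(i < N.+1) (((i : nat) == 0%N)%:R - (if (i < N)%N then a i else 0)) = 1 - \sum_(i < N) a i.
Proof.
have h : \sum_(i < N.+1) ((i : nat) == 0%N)%:R = 1 :> K.
  rewrite -[RHS](@sum_delta _ N.+1 0%N (fun _ => (1 : K))) //.
  by apply: eq_bigr => i _; case: eqP.
by rewrite sumrB sum_pad // h.
Qed.

Lemma exists_nz M (b : nat -> K) : \sum_(i < M) b i != 0 -> exists i, (i < M)%N /\ b i != 0.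
Proof.
move=> H; apply: contrapT => H1; move: H; rewrite big1 ?eqxx // => i _.
by case: (eqVneq (b i) 0) => // bi; exfalso; apply: H1; exists i; split.
Qed.

Definition Wg (x : V) := exists N (a : nat -> K), \sum_(i < N) a i = 0 /\ x = comb N a.

Lemma Wg_S x : Wg x -> S x.
Proof. by case=> N [a [_ ->]]; apply: S_comb. Qed.

Lemma Wg_sub : subspace Wg.
Proof.
split; first by exists 0%N, (fun _ => 0); rewrite /comb !big_ord0.
split.
  move=> u v [N1 [a1 [s1 ->]]] [N2 [a2 [s2 ->]]].
  pose M := (N1 + N2)%N.
  have h1 : (N1 <= M)%N by rewrite leq_addr.
  have h2 : (N2 <= M)%N by rewrite leq_addl.
  exists M, (fun i => (if (i < N1)%N then a1 i else 0) + (if (i < N2)%N then a2 i else 0)).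
  split.
    by rewrite big_split /= !sum_pad // s1 s2 addr0.
  rewrite -(comb_pad a1 h1) -(comb_pad a2 h2) /comb -big_split /=.
  by apply: eq_bigr => i _; rewrite scalerDl.
move=> c v [N [a [s ->]]]; exists N, (fun i => c * a i); split.
  by rewrite -mulr_sumr s mulr0.
by rewrite /comb scaler_sumr; apply: eq_bigr => i _; rewrite scalerA.
Qed.

Lemma no_seq : False.
Proof.
have nW : ~ Wg (g 0%N).
  case=> N [a [s e]].
  have := comb_key N a; rewrite -e subrr => e2.
  have [i [iN bi]] : exists i, (i < N.+1)%N /\
      (i == 0%N)%:R - (if (i < N)%N then a i else 0) != 0 :> K.
    by apply: exists_nz; rewrite sum_key s subr0 oner_neq0.
  have := @comb_lt N.+1 (fun i => (i == 0%N)%:R - (if (i < N)%N then a i else 0))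
    (ex_intro _ i (conj iN bi)); rewrite -e2 (uf_0 HS HL) //.
  by rewrite ltNge leNye.
have [w0 [N0 [a0 [s0 e0]]] Hw0] := HB Wg_sub Wg_S (Sg 0%N) nW.
pose M := N0.+1.
have Ww : Wg (g 0%N - g M).
  exists M.+1, (fun i => (i == 0%N)%:R - (i == M)%:R); split.
    have h0 : \sum_(i < M.+1) ((i : nat) == 0%N)%:R = 1 :> K.
      rewrite -[RHS](@sum_delta _ M.+1 0%N (fun _ => (1 : K))) //.
      by apply: eq_bigr => i _; case: eqP.
    have h1 : \sum_(i < M.+1) ((i : nat) == M)%:R = 1 :> K.
      rewrite -[RHS](@sum_delta _ M.+1 M (fun _ => (1 : K))) //.
      by apply: eq_bigr => i _; case: eqP.
    by rewrite sumrB h0 h1 subrr.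
  rewrite /comb (eq_bigr (fun i : 'I_M.+1 => ((i : nat) == 0%N)%:R *: g i -
   ((i : nat) == M)%:R *: g i)); last by move=> i _; rewrite scalerBl.
  rewrite sumrB -(@sum_delta _ M.+1 0%N g) // -(@sum_delta _ M.+1 M g) //.
  by congr (_ - _); apply: eq_bigr => i _; case: eqP => _; rewrite ?scale1r ?scale0r.
have := Hw0 _ Ww.
have -> : g 0%N - (g 0%N - g M) = g M by rewrite opprB addrC subrK.
rewrite e0 comb_key.
have [i [iN bi]] : exists i, (i < N0.+1)%N /\
    (i == 0%N)%:R - (if (i < N0)%N then a0 i else 0) != 0 :> K.
  by apply: exists_nz; rewrite sum_key s0 subr0 oner_neq0.
have := @comb_lt N0.+1 (fun i => (i == 0%N)%:R - (if (i < N0)%N then a0 i else 0))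
  (ex_intro _ i (conj iN bi)).
by move=> h1 h2; have := lt_le_trans h1 h2; rewrite ltxx.
Qed.

End Seq.

Lemma bapprox_ind (P : V -> Prop) :
  (forall v, S v -> (forall u, S u -> (L u < L v)%E -> P u) -> P v) ->
  forall v, S v -> P v.
Proof.
move=> step v0 Sv0; apply: contrapT => nP0.
have bad : forall v, S v /\ ~ P v -> {u | (S u /\ ~ P u) /\ (L u < L v)%E}.
  move=> v [Sv nPv]; apply: cid; apply: contrapT => H; apply: nPv; apply: step => // u Su Luv.
  by apply: contrapT => nPu; apply: H; exists u.
pose B := {v | S v /\ ~ P v}.
pose F (b : B) : B := exist _ (sval (bad _ (svalP b))) (proj1 (svalP (bad _ (svalP b)))).
pose g n := sval (iter n F (exist _ v0 (conj Sv0 nP0))).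
apply: (@no_seq g).
- by move=> n; exact: (proj1 (svalP (iter n F _))).
- by move=> n; rewrite /g iterS; exact: (proj2 (svalP (bad _ _))).
Qed.

Lemma best_bapprox : best_approximation L -> bapprox.
Proof.
move=> H W HW _ v _ nWv; apply: (H W HW _ v nWv); by exists v.
Qed.

End WF.

Lemma pair_ind (R : realType) (K : fieldType) (V : lmodType K) (S : V -> Prop)
  (L1 L2 : V -> \bar R)
  (I1 : forall P : V -> Prop, (forall v, S v -> (forall u, S u -> (L1 u < L1 v)%E -> P u) -> P v) ->
     forall v, S v -> P v)
  (I2 : forall P : V -> Prop, (forall v, S v -> (forall u, S u -> (L2 u < L2 v)%E -> P u) -> P v) ->
     forall v, S v -> P v)
  (P : V -> Prop) :
  (forall v, S v -> (forall u, S u -> (L1 u <= L1 v)%E -> (L2 u <= L2 v)%E ->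
       (L1 u < L1 v)%E \/ (L2 u < L2 v)%E -> P u) -> P v) ->
  forall v, S v -> P v.
Proof.
move=> step.
suff H : forall v, S v -> forall u, S u -> (L1 u <= L1 v)%E -> P u.
  by move=> v Sv; apply: (H v Sv v Sv).
apply: I1 => v Sv IH1.
apply: (I2 (fun u => (L1 u <= L1 v)%E -> P u)) => u Su IH2 luv.
apply: step => // w Sw l1 l2 [h|h].
- by apply: (IH1 w Sw (lt_le_trans h luv) w Sw).
- by apply: IH2 => //; apply: le_trans l1 luv.
Qed.


Lemma In_map (T U : Type) (f : T -> U) s y :
  List.In y (map f s) <-> exists x, f x = y /\ List.In x s.
Proof.
elim: s => [|a s IH] /=; first by split=> // [[x []]].
split.
  by case=> [<-|/IH [x [fx Hx]]]; [exists a; split=> //; left | exists x; split=> //; right].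
by case=> x [fx [->|Hx]]; [left | right; apply/IH; exists x].
Qed.

Lemma In_cat (T : Type) (s1 s2 : seq T) x : List.In x (s1 ++ s2) -> List.In x s1 \/ List.In x s2.
Proof. by elim: s1 => [|a s1 IH] /=; [right | case=> [->|/IH[]]; auto]. Qed.

Lemma In_filter (T : Type) (P : pred T) s x : List.In x (filter P s) <-> List.In x s /\ P x.
Proof.
elim: s => [|a s IH] /=; first by split=> // [[]].
case: ifP => Pa /=.
  split; first by case=> [<-|/IH [Hx Px]]; split=> //; [left|right].
  by case=> [[->|Hx] Px]; [left|right; apply/IH].
split; first by move/IH=> [Hx Px]; split=> //; right.
by case=> [[<-|Hx] Px]; [rewrite Px in Pa | apply/IH].
Qed.

Lemma NoDup_map_filter (T U : Type) (f : T -> U) (P : pred T) s :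
  List.NoDup (map f s) -> List.NoDup (map f (filter P s)).
Proof.
elim: s => [|a s IH] //= /List.NoDup_cons_iff [na ns].
case: ifP => _ /=; last exact: IH.
apply: List.NoDup_cons; last exact: IH.
move/In_map=> [x [fx /In_filter [Hx _]]]; apply: na; apply/In_map; by exists x.
Qed.

Lemma sumID (T : Type) (M : zmodType) (s : seq T) (a P : pred T) (F : T -> M) :
  \sum_(p <- s | P p) F p = \sum_(p <- s | P p && a p) F p + \sum_(p <- s | P p && ~~ a p) F p.
Proof. by rewrite (bigID a). Qed.

Section Good.
Variables (R : realType) (K : fieldType) (V : lmodType K) (S : V -> Prop).
Hypothesis HS : subspace S.

Definition Vm (L1 L2 : V -> \bar R) s t x := exists a b, S a /\ S b /\ x = (a + b)%R /\
  (L1 a < s)%E /\ (L2 a <= t)%E /\ (L1 b <= s)%E /\ (L2 b < t)%E.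

Lemma Vm_swap L1 L2 s t x : Vm L1 L2 s t x -> Vm L2 L1 t s x.
Proof. by case=> a [b [Sa [Sb [-> [h1 [h2 [h3 h4]]]]]]]; exists b, a; rewrite addrC. Qed.

Definition good (L1 L2 : V -> \bar R) (F : V -> Prop) :=
  (forall v, F v -> S v /\ v != 0) /\
  forall s t (sq : seq (V * K)), List.NoDup (map fst sq) ->
    (forall p, List.In p sq -> F p.1 /\ L1 p.1 = s /\ L2 p.1 = t) ->
    Vm L1 L2 s t (\sum_(p <- sq) p.2 *: p.1) -> forall p, List.In p sq -> p.2 = 0.

Lemma good_swap L1 L2 F : good L1 L2 F -> good L2 L1 F.
Proof.
case=> H0 H; split=> // s t sq nd Hs /Vm_swap hv; apply: (H t s sq nd) => // p Hp.
by have [? [? ?]] := Hs p Hp.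
Qed.

Variables (L1 L2 : V -> \bar R).
Hypotheses (H1 : ufilt S L1) (H2 : ufilt S L2).

Lemma good_ortho F : good L1 L2 F -> forall sq : seq (V * K), List.NoDup (map fst sq) ->
  (forall p, List.In p sq -> F p.1) ->
  L1 (\sum_(p <- sq) p.2 *: p.1) = emax_seq sq (fun p => p.2 != 0) (fun p => L1 p.1).
Proof.
move=> [G0 G] sq nd Fsq.
have [S0 [SD SZ]] := HS.
have SF p : List.In p sq -> S p.1 by move=> /Fsq /G0 [].
have Sterm p : List.In p sq -> S (p.2 *: p.1) by move=> /SF; apply: SZ.
have Ssum (P : pred (V * K)) : S (\sum_(p <- sq | P p) p.2 *: p.1).
  by apply: subspace_sum => // p Hp _; apply: Sterm.
set M := emax_seq _ _ _.
have le1 : (L1 (\sum_(p <- sq) p.2 *: p.1) <= M)%E.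
  apply: (uf_sum_le HS H1) => p Hp _; split; first exact: Sterm.
  case: (eqVneq p.2 0) => [->|p2]; first by rewrite scale0r (uf_0 HS H1) leNye.
  by rewrite (uf_scaleE HS H1 p2 (SF _ Hp)); apply: (emax_ub (fun p => L1 p.1) Hp).
apply/eqP; rewrite eq_le le1 /=.
case: (emax_att sq (fun p => p.2 != 0) (fun p => L1 p.1)) => [e|[p0 [Hp0 P0] E0]].
  by rewrite /M e leNye.
rewrite -/M in E0.
have Mgt : (-oo < M)%E.
  rewrite -E0 ltNge leeNy_eq; apply/negP => /eqP /(uf_zero H1 (SF _ Hp0)) e.
  by have := (G0 _ (Fsq _ Hp0)).2; rewrite e eqxx.
rewrite leNgt; apply/negP => hlt.
pose P1 (p : V * K) := (p.2 != 0) && (L1 p.1 == M).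
set tt := emax_seq sq P1 (fun p => L2 p.1).
have P1p0 : P1 p0 by rewrite /P1 P0 E0 eqxx.
have [p1 [Hp1 P1p1] E1] : exists2 p1, List.In p1 sq /\ P1 p1 & L2 p1.1 = tt.
  case: (emax_att sq P1 (fun p => L2 p.1)) => [e|//].
  have := emax_ub (fun p => L2 p.1) Hp0 P1p0; rewrite /tt in e; rewrite e leeNy_eq.
  move/eqP/(uf_zero H2 (SF _ Hp0)) => e2.
  by have := (G0 _ (Fsq _ Hp0)).2; rewrite e2 eqxx.
have ttgt : (-oo < tt)%E.
  rewrite -E1 ltNge leeNy_eq; apply/negP => /eqP /(uf_zero H2 (SF _ Hp1)) e.
  by have := (G0 _ (Fsq _ Hp1)).2; rewrite e eqxx.
have low : (L1 (\sum_(p <- sq | ~~ P1 p) p.2 *: p.1) < M)%E.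
  apply: (uf_sum_lt HS H1) => // p Hp nP; split; first exact: Sterm.
  case: (eqVneq p.2 0) => [->|p2]; first by rewrite scale0r (uf_0 HS H1).
  rewrite (uf_scaleE HS H1 p2 (SF _ Hp)) lt_neqAle (emax_ub (fun p => L1 p.1) Hp) // andbT.
  by move: nP; rewrite /P1 p2.
have etop := @sumID _ _ sq P1 xpredT (fun p => p.2 *: p.1).
set top := \sum_(p <- sq | _ && P1 p) _ in etop.
set bot := \sum_(p <- sq | _ && ~~ P1 p) _ in etop.
have Ltop : (L1 top < M)%E.
  have -> : top = (\sum_(p <- sq) p.2 *: p.1) + - bot by rewrite etop addrK.
  apply: le_lt_trans (uf_add H1 (Ssum xpredT) (subspace_opp HS (Ssum _))) _.
  by rewrite gt_max hlt (uf_opp HS H1) ?Ssum.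
have L2top : (L2 top <= tt)%E.
  apply: (uf_sum_le HS H2) => p Hp /= P1p; split; first exact: Sterm.
  have p2 : p.2 != 0 by move: P1p; rewrite /P1 => /andP[].
  by rewrite (uf_scaleE HS H2 p2 (SF _ Hp)); apply: (emax_ub (fun p => L2 p.1) Hp).
have etop2 := @sumID _ _ sq (fun p => L2 p.1 == tt) (fun p => xpredT p && P1 p) (fun p => p.2 *: p.1).
rewrite -/top in etop2.
set xT := \sum_(p <- sq | _ && (L2 p.1 == tt)) _ in etop2.
set rest := \sum_(p <- sq | _ && ~~ (L2 p.1 == tt)) _ in etop2.
have Lrest1 : (L1 rest <= M)%E.
  apply: (uf_sum_le HS H1) => p Hp /andP [/= P1p _]; split; first exact: Sterm.
  move: P1p; rewrite /P1 => /andP [p2 /eqP <-].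
  by rewrite (uf_scaleE HS H1 p2 (SF _ Hp)).
have Lrest2 : (L2 rest < tt)%E.
  apply: (uf_sum_lt HS H2) => // p Hp /andP [/= P1p ne]; split; first exact: Sterm.
  have p2 : p.2 != 0 by move: P1p; rewrite /P1 => /andP [].
  by rewrite (uf_scaleE HS H2 p2 (SF _ Hp)) lt_neqAle ne (emax_ub (fun p => L2 p.1) Hp).
have VmT : Vm L1 L2 M tt xT.
  exists top, (- rest); split; first exact: Ssum.
  split; first by apply: subspace_opp => //; apply: Ssum.
  split; first by rewrite etop2 addrK.
  by rewrite (uf_opp HS H1 (Ssum _)) (uf_opp HS H2 (Ssum _)); do 3 (split=> //).
pose sq' := filter (fun p => P1 p && (L2 p.1 == tt)) sq.
have := G M tt sq' (NoDup_map_filter _ nd).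
have Hin : List.In p1 sq' by apply/In_filter; split => //; rewrite P1p1 E1 eqxx.
move=> /(_ _ _ p1 Hin); move: P1p1; rewrite /P1 => /andP [/eqP p2 _] hh; apply: p2; apply: hh.
  move=> p /In_filter [Hp /andP [/andP [_ /eqP e1] /eqP e2]]; split=> //; exact: Fsq.
by rewrite /sq' big_filter.
Qed.

Definition lspan (F : V -> Prop) (v : V) :=
  exists sq : seq (V * K), (forall p, List.In p sq -> F p.1) /\ v = \sum_(p <- sq) p.2 *: p.1.

Lemma lspan0 F : lspan F 0.
Proof. by exists [::]; rewrite big_nil. Qed.

Lemma lspanD F u v : lspan F u -> lspan F v -> lspan F (u + v).
Proof.
move=> [s1 [H1' ->]] [s2 [H2' ->]]; exists (s1 ++ s2); rewrite big_cat; split=> // p.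
by move=> Hp; case: (In_cat Hp) => [/H1'|/H2'].
Qed.

Lemma Vm0 s t : (-oo < s)%E -> (-oo < t)%E -> Vm L1 L2 s t 0.
Proof.
have [S0 _] := HS.
by move=> hs ht; exists 0, 0; rewrite addr0 (uf_0 HS H1) (uf_0 HS H2) !leNye hs ht; do !split.
Qed.

Lemma VmZ s t (c : K) x : Vm L1 L2 s t x -> Vm L1 L2 s t (c *: x).
Proof.
have [S0 [SD SZ]] := HS.
case=> a [b [Sa [Sb [-> [h1 [h2 [h3 h4]]]]]]]; exists (c *: a), (c *: b).
rewrite scalerDr; do 3 (split=> //; try by apply: SZ).
split; first exact: le_lt_trans (uf_scale H1 c Sa) h1.
split; first exact: le_trans (uf_scale H2 c Sa) h2.
split; first exact: le_trans (uf_scale H1 c Sb) h3.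
exact: le_lt_trans (uf_scale H2 c Sb) h4.
Qed.

Lemma sum_none (T : Type) (M : zmodType) (s : seq T) (P : pred T) (f : T -> M) :
  (forall q, List.In q s -> ~~ P q) -> \sum_(q <- s | P q) f q = 0.
Proof.
elim: s => [|q s IH] H; first by rewrite big_nil.
rewrite big_cons (negbTE (H q (or_introl erefl))); apply: IH => q' Hq'; apply: H; by right.
Qed.

Lemma sum_some (T : Type) (M : zmodType) (s : seq T) (P : pred T) (f : T -> M) :
  \sum_(q <- s | P q) f q != 0 -> exists q, List.In q s /\ P q.
Proof.
move=> H; apply: contrapT => H'; move: H; rewrite sum_none ?eqxx // => q Hq.
by apply/negP => Pq; apply: H'; exists q.
Qed.

Lemma coef_unique (sq : seq (V * K)) p : List.NoDup (map fst sq) -> List.In p sq ->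
  \sum_(q <- sq | q.1 == p.1) q.2 = p.2.
Proof.
elim: sq => [//|q sq IH] /List.NoDup_cons_iff [nq nd] /= [<-|Hp]; rewrite big_cons.
  rewrite eqxx sum_none ?addr0 // => q' Hq'; apply/negP => /eqP e; apply: nq.
  by apply/In_map; exists q'.
case: eqP => [e|_]; last exact: IH.
by exfalso; apply: nq; rewrite e; apply/In_map; exists p.
Qed.

Lemma sumID0 (T : Type) (M : zmodType) (s : seq T) (a : pred T) (F : T -> M) :
  \sum_(p <- s) F p = \sum_(p <- s | a p) F p + \sum_(p <- s | ~~ a p) F p.
Proof. by rewrite (bigID a). Qed.

Lemma chain_list (Fs : set (set V)) (sq : seq (V * K)) :
  total_on Fs subset -> (forall p, List.In p sq -> (\bigcup_(X in Fs) X)%classic p.1) ->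
  sq = [::] \/ exists2 X, Fs X & forall p, List.In p sq -> X p.1.
Proof.
move=> tot; elim: sq => [|q sq IH] H; first by left.
right; have [X FX Xq] := H q (or_introl erefl).
case: IH => [|->|[Y FY HY]]; first by move=> p Hp; apply: H; right.
  by exists X => // p [<-|].
case: (tot X Y FX FY) => XY.
  by exists Y => // p [<-|/HY//]; apply: XY.
by exists X => // p [<-|/HY/XY//].
Qed.

Hypotheses
  (I1 : forall P : V -> Prop, (forall v, S v -> (forall u, S u -> (L1 u < L1 v)%E -> P u) -> P v) ->
     forall v, S v -> P v)
  (I2 : forall P : V -> Prop, (forall v, S v -> (forall u, S u -> (L2 u < L2 v)%E -> P u) -> P v) ->
     forall v, S v -> P v).

Lemma good_exists : exists F, good L1 L2 F /\ forall v, S v -> lspan F v.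
Proof.
have [S0 [SD SZ]] := HS.
have [A [gA maxA]] : exists A, good L1 L2 A /\ forall B, (A `<` B)%classic -> ~ good L1 L2 B.
  apply: Zorn_bigcup => Fs sub tot; split.
    by move=> v [X FX Xv]; apply: (sub X FX).1.
  move=> s t sq nd Hsq hv p Hp.
  have Hsq' : forall p, List.In p sq -> (\bigcup_(X in Fs) X)%classic p.1 by move=> q /Hsq [].
  case: (chain_list tot Hsq') => [e|[X FX HX]]; first by rewrite e in Hp.
  apply: ((sub X FX).2 s t sq nd _ hv p Hp) => q Hq.
  by have [_ [? ?]] := Hsq q Hq; split=> //; apply: HX.
exists A; split=> //.
have [A0 Ag] := gA.
apply: (pair_ind I1 I2) => v Sv IH.
case: (eqVneq v 0) => [->|v0]; first exact: lspan0.
have s0 : (-oo < L1 v)%E.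
  by rewrite ltNge leeNy_eq; apply/negP => /eqP /(uf_zero H1 Sv) e; rewrite e eqxx in v0.
have t0 : (-oo < L2 v)%E.
  by rewrite ltNge leeNy_eq; apply/negP => /eqP /(uf_zero H2 Sv) e; rewrite e eqxx in v0.
case: (pselect (exists sq : seq (V * K), (forall p, List.In p sq -> A p.1 /\ L1 p.1 = L1 v /\ L2 p.1 = L2 v)
   /\ Vm L1 L2 (L1 v) (L2 v) (v - \sum_(p <- sq) p.2 *: p.1))) => [[sq [Hsq hv]]|no].
  case: hv => a [b [Sa [Sb [e [h1 [h2 [h3 h4]]]]]]].
  have -> : v = a + b + \sum_(p <- sq) p.2 *: p.1 by rewrite -e subrK.
  apply: lspanD; last by exists sq; split=> // p /Hsq [].
  apply: lspanD; first by apply: IH => //; [exact: ltW | left].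
  by apply: IH => //; [exact: ltW | right].
exfalso.
have nAv : ~ A v.
  move=> Av; apply: no; exists [:: (v, 1)]; split.
    by move=> p [<-|//].
  by rewrite big_cons big_nil scale1r addr0 subrr; apply: Vm0.
apply: (maxA (fun x => A x \/ x = v)).
  split; first by move=> x Ax; left.
  by move=> H; apply: nAv; apply: H; right.
split.
  by move=> x [/A0 //|->].
move=> s t sq nd Hsq hv.
pose c := \sum_(q <- sq | q.1 == v) q.2.
pose rest := filter (fun q => q.1 != v) sq.
have Hrest : forall q, List.In q rest -> A q.1 /\ L1 q.1 = s /\ L2 q.1 = t.
  move=> q /In_filter [Hq nq]; have [[Aq|eq] [? ?]] := Hsq q Hq; first by split.
  by rewrite eq eqxx in nq.
have esum : \sum_(p <- sq) p.2 *: p.1 = c *: v + \sum_(q <- rest) q.2 *: q.1.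
  rewrite (sumID0 _ (fun q => q.1 == v)) /rest big_filter /c scaler_suml.
  by congr (_ + _); apply: eq_bigr => q /eqP ->.
have [c0|cn0] := eqVneq c 0.
  have hr : forall q, List.In q rest -> q.2 = 0.
    apply: (Ag s t rest (NoDup_map_filter _ nd) Hrest).
    have e2 : \sum_(p <- sq) p.2 *: p.1 = \sum_(q <- rest) q.2 *: q.1 by rewrite esum c0 scale0r add0r.
    by rewrite -e2.
  move=> p Hp; case: (eqVneq p.1 v) => [e|ne].
    by rewrite -(coef_unique nd Hp) e.
  by apply: hr; apply/In_filter.
exfalso.
have [q [Hq /eqP qv]] := sum_some cn0.
have [_ [e1 e2]] := Hsq q Hq; rewrite qv in e1 e2; subst s t.
apply: no; exists (map (fun q => (q.1, - (c^-1 * q.2))) rest); split.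
  by move=> p /In_map [q' [<- /Hrest]].
have -> : v - \sum_(p <- map (fun q => (q.1, - (c^-1 * q.2))) rest) p.2 *: p.1 =
    c^-1 *: \sum_(p <- sq) p.2 *: p.1.
  rewrite big_map esum scalerDr scalerA mulVf // scale1r scaler_sumr -sumrN.
  by congr (_ + _); apply: eq_bigr => q' _; rewrite /= scaleNr opprK scalerA.
exact: VmZ.
Qed.

End Good.


Lemma NoDup_map_inj (T U : Type) (f : T -> U) (s : seq T) :
  (forall a b, List.In a s -> List.In b s -> f a = f b -> a = b) ->
  List.NoDup s -> List.NoDup (map f s).
Proof.
elim: s => [|a s IH] H nd /=; first by constructor.
move: nd => /List.NoDup_cons_iff [na nd].
constructor.
  move/In_map => [b [fb Hb]]; apply: na; rewrite (H a b) //; [by left | by right].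
by apply: IH => // x y Hx Hy; apply: H; right.
Qed.

Lemma emax_map (R : realType) (T U : Type) (f : T -> U) s (P : U -> bool) (h : U -> \bar R) :
  emax_seq (map f s) P h = emax_seq s (fun x => P (f x)) (fun x => h (f x)).
Proof. by rewrite /emax_seq big_map. Qed.

Lemma emax_eq_in (R : realType) (T : Type) s (P : T -> bool) (f g : T -> \bar R) :
  (forall p, List.In p s -> P p -> f p = g p) -> emax_seq s P f = emax_seq s P g.
Proof.
elim: s => [|q s IH] H; first by rewrite !emax_nil.
rewrite !emax_cons IH; last by move=> p Hp; apply: H; right.
by case: ifP => // Pq; rewrite H //; left.
Qed.

Section Split.
Variables (R : realType) (K : fieldType) (V : lmodType K) (T1 T2 : Type)
  (b1 : T1 -> V) (b2 : T2 -> V).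

Definition bb (ij : T1 + T2) := match ij with inl i => b1 i | inr i => b2 i end.

Fixpoint sl (s : seq ((T1 + T2) * K)) : seq (V * K) :=
  match s with
  | [::] => [::]
  | (inl i, c) :: s' => (b1 i, c) :: sl s'
  | (inr _, _) :: s' => sl s'
  end.

Fixpoint sr (s : seq ((T1 + T2) * K)) : seq (V * K) :=
  match s with
  | [::] => [::]
  | (inl _, _) :: s' => sr s'
  | (inr i, c) :: s' => (b2 i, c) :: sr s'
  end.

Lemma split_sum s : \sum_(p <- s) p.2 *: bb p.1 =
  \sum_(p <- sl s) p.2 *: p.1 + \sum_(p <- sr s) p.2 *: p.1.
Proof.
elim: s => [|[[i|i] c] s IH] /=; first by rewrite !big_nil addr0.
  by rewrite !big_cons IH addrA.
by rewrite !big_cons IH addrCA.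
Qed.

Lemma split_emax (L : V -> \bar R) s :
  emax_seq s (fun p => p.2 != 0) (fun p => L (bb p.1)) =
  Order.max (emax_seq (sl s) (fun p => p.2 != 0) (fun p => L p.1))
            (emax_seq (sr s) (fun p => p.2 != 0) (fun p => L p.1)).
Proof.
elim: s => [|[[i|i] c] s IH] /=; first by rewrite !emax_nil maxxx.
  by rewrite !emax_cons /= IH; case: ifP => // _; rewrite maxA.
rewrite !emax_cons /= IH; case: ifP => // _.
by rewrite maxA (maxC (L (b2 i))) -maxA.
Qed.

Lemma In_sl s q : List.In q (sl s) -> exists i, q.1 = b1 i.
Proof.
elim: s => [|[[i|i] c] s IH] //=.
by case=> [<-|/IH//]; exists i.
Qed.

Lemma In_sr s q : List.In q (sr s) -> exists i, q.1 = b2 i.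
Proof.
elim: s => [|[[i|i] c] s IH] //=.
by case=> [<-|/IH//]; exists i.
Qed.

Lemma In_sl_inv s i : List.In (b1 i) (map fst (sl s)) -> List.In (inl i) (map fst s) \/
   exists i', b1 i' = b1 i /\ List.In (inl i') (map fst s).
Proof.
elim: s => [|[[i'|i'] c] s IH] //=.
  by case=> [e|/IH [H|[i2 [e H]]]]; right; [exists i'; split=> //; left | exists i; split=> //; right | exists i2; split=> //; right].
by move=> /IH [H|[i2 [e H]]]; [left; right | right; exists i2; split=> //; right].
Qed.

Lemma NoDup_sl s : (forall i i', b1 i = b1 i' -> i = i') ->
  List.NoDup (map fst s) -> List.NoDup (map fst (sl s)).
Proof.
move=> inj; elim: s => [|[[i|i] c] s IH] /=; first by constructor.
  move=> /List.NoDup_cons_iff [ni nd]; constructor; last exact: IH.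
  by move=> /In_sl_inv [//|[i' [/inj -> //]]].
by move=> /List.NoDup_cons_iff [_ nd]; apply: IH.
Qed.

Lemma In_sr_inv s i : List.In (b2 i) (map fst (sr s)) ->
   exists i', b2 i' = b2 i /\ List.In (inr i') (map fst s).
Proof.
elim: s => [|[[i'|i'] c] s IH] //=.
  by move=> /IH [i2 [e H]]; exists i2; split=> //; right.
by case=> [e|/IH [i2 [e H]]]; [exists i'; split=> //; left | exists i2; split=> //; right].
Qed.

Lemma NoDup_sr s : (forall i i', b2 i = b2 i' -> i = i') ->
  List.NoDup (map fst s) -> List.NoDup (map fst (sr s)).
Proof.
move=> inj; elim: s => [|[[i|i] c] s IH] /=; first by constructor.
  by move=> /List.NoDup_cons_iff [_ nd]; apply: IH.
move=> /List.NoDup_cons_iff [ni nd]; constructor; last exact: IH.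
by move=> /In_sr_inv [i' [/inj -> //]].
Qed.

End Split.

Section Main.
Variables (R : realType) (K : fieldType) (A : int -> lmodType K)
  (d : forall k : int, {linear A (k + 1) -> A k}) (l : forall k : int, A k -> \bar R).
Arguments l : clear implicits.
Arguments d : clear implicits.
Hypotheses (Hcc : ascending_chain_complex d l) (Hac : acyclic d)
  (Hba : forall k : int, best_approximation (l k)).

Let Hdd : forall k (x : A (k + 1 + 1)), d k (d (k + 1) x) = 0 := Hcc.1.
Let Hf : forall k : int, filtration_fun (l k) := Hcc.2.1.

Definition B j (x : A j) := exists y, d j y = x.
Definition Z j (y : A (j + 1)) := d j y = 0.

Lemma subB j : subspace (@B j).
Proof.
split; first by exists 0; rewrite linear0.
split; first by move=> u v [y1 <-] [y2 <-]; exists (y1 + y2); rewrite linearD.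
by move=> c v [y <-]; exists (c *: y); rewrite linearZ.
Qed.

Lemma subZ j : subspace (@Z j).
Proof.
rewrite /Z; split; first by rewrite linear0.
split; first by move=> u v hu hv; rewrite linearD hu hv addr0.
by move=> c v hv; rewrite linearZZ hv scaler0.
Qed.

Lemma subT (V : lmodType K) : subspace (fun _ : V => True).
Proof. by []. Qed.

Let uT (k : int) := @ff_ufilt R K (A k) (l k) (fun _ => True) (Hf k).

Lemma lift_ex j (x : A j) : exists y : A (j + 1),
  B x -> d j y = x /\ forall y', d j y' = x -> (l (j + 1) y <= l (j + 1) y')%E.
Proof.
case: (pselect (B x)) => [[y0 e]|nB]; last by exists 0.
case: (eqVneq x 0) => [x0|x0].
  exists 0 => _; split; first by rewrite linear0.
  by move=> y' _; rewrite (uf_0 (subT _) (uT _)) leNye.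
have nZ : ~ Z y0 by rewrite /Z e; apply/eqP.
have [w0 Zw0 Hw0] := Hba (subZ j) (ex_intro _ y0 nZ) nZ.
exists (y0 - w0) => _; split; first by rewrite linearB e Zw0 subr0.
move=> y' ey'; have Zw : Z (y0 - y') by rewrite /Z linearB e ey' subrr.
by have := Hw0 _ Zw; rewrite subKr.
Qed.

Definition lift j (x : A j) : A (j + 1) := proj1_sig (cid (lift_ex x)).

Lemma liftP j (x : A j) : B x ->
  d j (lift x) = x /\ forall y', d j y' = x -> (l (j + 1) (lift x) <= l (j + 1) y')%E.
Proof. exact: (proj2_sig (cid (lift_ex x))). Qed.

Definition L2 j (x : A j) := l (j + 1) (lift x).

Lemma uf1 j : ufilt (@B j) (l j).
Proof. exact: ff_ufilt. Qed.

Lemma uf2 j : ufilt (@B j) (@L2 j).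
Proof.
split.
- move=> x y Bx By; have [ex _] := liftP Bx; have [ey _] := liftP By.
  have Bxy : B (x + y) by apply: (subB j).2.1.
  apply: le_trans ((liftP Bxy).2 (lift x + lift y) _) _; first by rewrite linearD ex ey.
  exact: (uf_add (uT _)).
- move=> c x Bx; have [ex _] := liftP Bx.
  have Bcx : B (c *: x) by apply: (subB j).2.2.
  apply: le_trans ((liftP Bcx).2 (c *: lift x) _) _; first by rewrite linearZZ ex.
  exact: (uf_scale (uT _)).
- move=> x Bx; split.
    move=> /(uf_zero (uT _) I) e; have [ex _] := liftP Bx; by rewrite -ex e linear0.
  move=> ->; apply/eqP; rewrite eq_le leNye andbT /L2.
  have B0 : B (0 : A j) by apply: (subB j).1.
  by rewrite -(uf_0 (subT _) (uT (j + 1))) (liftP B0).2 // linear0.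
Qed.

Lemma ba1 j : bapprox (@B j) (l j).
Proof. exact: best_bapprox. Qed.

Lemma ba2 j : bapprox (@B j) (@L2 j).
Proof.
move=> W HW WB v Bv nWv.
pose W' (y : A (j + 1)) := W (d j y).
have HW' : subspace W'.
  have [W0 [WD WZ]] := HW; rewrite /W'; split; first by rewrite linear0.
  by split; [move=> u w hu hw; rewrite linearD; apply: WD | move=> c w hw; rewrite linearZ; apply: WZ].
have [ev _] := liftP Bv.
have nW' : ~ W' (lift v) by rewrite /W' ev.
have [y0 Wy0 Hy0] := Hba HW' (ex_intro (fun y => ~ W' y) (lift v) nW') nW'.
exists (d j y0) => // w Ww.
have Bvw : B (v - d j y0) by apply: subspace_sub; [apply: subB | | exists y0].
have Bvw' : B (v - w) by apply: subspace_sub; [apply: subB | | apply: WB].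
apply: le_trans ((liftP Bvw).2 (lift v - y0) _) _; first by rewrite linearB ev.
have [ew _] := liftP Bvw'.
have Wy : W' (lift v - lift (v - w)) by rewrite /W' linearB ev ew subKr.
by have := Hy0 _ Wy; rewrite subKr.
Qed.

Lemma svd_ex j : exists F : A j -> Prop, good (@B j) (l j) (@L2 j) F /\ forall v, B v -> lspan F v.
Proof.
apply: good_exists; [exact: subB | exact: uf1 | exact: uf2 | |].
- by move=> P; apply: (bapprox_ind (@subB j) (@uf1 j) (@ba1 j)).
- by move=> P; apply: (bapprox_ind (@subB j) (@uf2 j) (@ba2 j)).
Qed.

Definition FF j : A j -> Prop := proj1_sig (cid (svd_ex j)).

Lemma FFP j : good (@B j) (l j) (@L2 j) (@FF j) /\ forall v, B v -> lspan (@FF j) v.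
Proof. exact: (proj2_sig (cid (svd_ex j))). Qed.

Definition G j (y : A (j + 1)) := exists x, FF x /\ y = lift x.


Lemma FF_B j (x : A j) : FF x -> B x /\ x != 0.
Proof. by move=> Fx; have [[H _] _] := FFP j; apply: H. Qed.

Lemma G_d j (y : A (j + 1)) : G y -> FF (d j y) /\ lift (d j y) = y.
Proof.
case=> x [Fx ->]; have [Bx _] := FF_B Fx; have [e _] := liftP Bx.
by rewrite e.
Qed.

Lemma G_inj j (y1 y2 : A (j + 1)) : G y1 -> G y2 -> d j y1 = d j y2 -> y1 = y2.
Proof. by move=> /G_d [_ e1] /G_d [_ e2] e; rewrite -e1 -e2 e. Qed.

Lemma G_nz j (y : A (j + 1)) : G y -> d j y != 0.
Proof. by move=> /G_d [/FF_B [_ ->] _]. Qed.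

Lemma Q3 j (s : seq (A (j + 1) * K)) (z : A (j + 1)) :
  List.NoDup (map fst s) -> (forall p, List.In p s -> G p.1) -> d j z = 0 ->
  l (j + 1) (\sum_(p <- s) p.2 *: p.1 + z) =
  Order.max (emax_seq s (fun p => p.2 != 0) (fun p => l (j + 1) p.1)) (l (j + 1) z).
Proof.
move=> nd Gs hz.
pose xs := map (fun p => (d j p.1, p.2)) s.
have nd' : List.NoDup (map fst xs).
  rewrite /xs -map_comp; have -> : fst \o (fun p => (d j p.1, p.2)) = (fun p => d j p.1) by [].
  have -> : (fun p : A (j + 1) * K => d j p.1) = (d j) \o fst by [].
  rewrite map_comp; apply: NoDup_map_inj => // a b /In_map [p [<- Hp]] /In_map [q [<- Hq]].
  by apply: G_inj; apply: Gs.
have Fxs : forall p, List.In p xs -> FF p.1.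
  by move=> p /In_map [q [<- Hq]]; have [] := G_d (Gs q Hq).
have hsum : \sum_(p <- xs) p.2 *: p.1 = d j (\sum_(p <- s) p.2 *: p.1).
  by rewrite big_map linear_sum; apply: eq_bigr => p _; rewrite linearZZ.
have ho := good_ortho (@subB j) (@uf2 j) (@uf1 j) (good_swap (FFP j).1) nd' Fxs.
rewrite emax_map /= in ho.
rewrite (emax_eq_in (g := fun p => l (j + 1) p.1)) in ho; last first.
  by move=> p Hp _; rewrite /L2 (G_d (Gs p Hp)).2.
set M := emax_seq s _ _ in ho *.
set y := \sum_(p <- s) p.2 *: p.1 in hsum *.
have hB : B (\sum_(p <- xs) p.2 *: p.1) by exists y.
have opt := (liftP hB).2; rewrite -/(L2 _) ho in opt.
have Myz : (M <= l (j + 1) (y + z))%E by apply: opt; rewrite linearD hz addr0.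
have My : (M <= l (j + 1) y)%E by apply: opt.
have yM : (l (j + 1) y <= M)%E.
  apply: (uf_sum_le (subT _) (uT _)) => p Hp _; split=> //.
  case: (eqVneq p.2 0) => [->|p2]; first by rewrite scale0r (uf_0 (subT _) (uT _)) leNye.
  by rewrite (uf_scaleE (subT _) (uT _) p2 I); apply: (emax_ub (fun p => l (j + 1) p.1) Hp).
have ey : l (j + 1) y = M by apply/eqP; rewrite eq_le yM My.
case: (leP (l (j + 1) z) M) => hzM.
  apply/eqP; rewrite eq_le Myz andbT; apply: le_trans (uf_add (uT _) I I) _.
  by rewrite ey ge_max lexx hzM.
by rewrite (uf_strict (subT _) (uT _)) // ey.
Qed.

Definition Y k (y : A k) : Prop :=
  exists j (e : j + 1 = k) (y' : A (j + 1)), G y' /\ y = eq_rect (j + 1) A y' k e.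

Lemma Y_spec j (y : A (j + 1)) : Y y <-> G y.
Proof.
split; last by move=> Gy; exists j, erefl, y.
case=> j' [e [y' [Gy' ->]]].
have ej : j' = j by apply: (addIr 1).
subst j'; by rewrite (eq_irrelevance e erefl).
Qed.

Definition II k := {y : A k | Y y}.

Lemma sig_eq (T : Type) (P : T -> Prop) (a b : {x | P x}) : sval a = sval b -> a = b.
Proof.
case: a => a Pa; case: b => b Pb /= e; subst b; congr exist; exact: proof_irrelevance.
Qed.

Section Deg.
Variable j : int.
Let b1 := fun i : II (j + 1 + 1) => d (j + 1) (sval i).
Let b2 := fun i : II (j + 1) => sval i.

Lemma G1 (i : II (j + 1 + 1)) : G (sval i).
Proof. exact: (Y_spec (sval i)).1 (svalP i). Qed.

Lemma G0 (i : II (j + 1)) : G (sval i).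
Proof. exact: (Y_spec (sval i)).1 (svalP i). Qed.

Lemma b1F i : FF (b1 i).
Proof. exact: (G_d (G1 i)).1. Qed.

Lemma b1_inj i i' : b1 i = b1 i' -> i = i'.
Proof. by move=> e; apply: sig_eq; apply: G_inj e; apply: G1. Qed.

Lemma b2_inj i i' : b2 i = b2 i' -> i = i'.
Proof. exact: sig_eq. Qed.

Lemma bb_nz ij : bb b1 b2 ij != 0.
Proof.
case: ij => i /=; first exact: (FF_B (b1F i)).2.
apply/eqP => e; have := G_nz (G0 i); by rewrite /b2 in e; rewrite e linear0 eqxx.
Qed.

Lemma bb_inj ij ij' : bb b1 b2 ij = bb b1 b2 ij' -> ij = ij'.
Proof.
case: ij => i; case: ij' => i' /=.
- by move/b1_inj ->.
- move=> e; exfalso; have := G_nz (G0 i').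
  have -> : sval i' = d (j + 1) (sval i) by exact: (esym e).
  by rewrite (Hdd (sval i)) eqxx.
- move=> e; exfalso; have := G_nz (G0 i).
  have -> : sval i = d (j + 1) (sval i') by exact: e.
  by rewrite (Hdd (sval i')) eqxx.
- by move/b2_inj ->.
Qed.

Lemma bb_ortho (s : seq ((II (j + 1 + 1) + II (j + 1)) * K)) :
  List.NoDup (map fst s) ->
  l (j + 1) (\sum_(p <- s) p.2 *: bb b1 b2 p.1) =
  emax_seq s (fun p => p.2 != 0) (fun p => l (j + 1) (bb b1 b2 p.1)).
Proof.
move=> nd; rewrite split_sum split_emax (addrC (\sum_(p <- sl b1 s) _)).
have Fl : forall p, List.In p (sl b1 s) -> FF p.1.
  by move=> p /In_sl [i ->]; apply: b1F.
have Gr : forall p, List.In p (sr b2 s) -> G p.1.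
  by move=> p /In_sr [i ->]; apply: G0.
have Bl : B (\sum_(p <- sl b1 s) p.2 *: p.1).
  apply: subspace_sum; first exact: subB.
  move=> p Hp _; apply: (subB (j + 1)).2.2; exact: (FF_B (Fl p Hp)).1.
have [u eu] := Bl.
rewrite Q3 //; last by rewrite -eu Hdd.
  rewrite maxC; congr Order.max.
  exact: (good_ortho (@subB (j + 1)) (@uf1 (j + 1)) (@uf2 (j + 1)) (FFP (j + 1)).1
    (NoDup_sl b1_inj nd) Fl).
exact: NoDup_sr b2_inj nd.
Qed.

Lemma lr (xs : seq (A j * K)) : (forall p, List.In p xs -> FF p.1) ->
  exists s : seq ((II (j + 1 + 1) + II (j + 1)) * K),
    \sum_(p <- s) p.2 *: bb b1 b2 p.1 = \sum_(p <- xs) p.2 *: lift p.1.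
Proof.
elim: xs => [|[x c] xs IH] H; first by exists [::]; rewrite !big_nil.
have [s es] := IH (fun p Hp => H p (or_intror Hp)).
have Gx : G (lift x) by exists x; split=> //; apply: (H (x, c)); left.
exists ((inr (exist _ (lift x) ((Y_spec _).2 Gx)), c) :: s).
by rewrite !big_cons es.
Qed.

Lemma ll (zs : seq (A (j + 1) * K)) : (forall p, List.In p zs -> FF p.1) ->
  exists s : seq ((II (j + 1 + 1) + II (j + 1)) * K),
    \sum_(p <- s) p.2 *: bb b1 b2 p.1 = \sum_(p <- zs) p.2 *: p.1.
Proof.
elim: zs => [|[x c] zs IH] H; first by exists [::]; rewrite !big_nil.
have [s es] := IH (fun p Hp => H p (or_intror Hp)).
have Fx : FF x by apply: (H (x, c)); left.
have Gx : G (lift x) by exists x.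
exists ((inl (exist _ (lift x) ((Y_spec _).2 Gx)), c) :: s).
rewrite !big_cons es /= /b1 /=.
by have [e _] := liftP (FF_B Fx).1; rewrite e.
Qed.

Lemma deg : is_basis (bb b1 b2) /\ l_orthogonal (l (j + 1)) (bb b1 b2).
Proof.
have ort := bb_ortho.
split; last by split; [exact: bb_inj | split; [exact: bb_nz | exact: ort]].
split; first exact: bb_inj.
split.
  move=> s nd e p Hp; have := ort s nd; rewrite e (uf_0 (subT _) (uT _)).
  case: (eqVneq p.2 0) => // p2 h; exfalso.
  have := @emax_ub _ _ s (fun p => p.2 != 0) (fun p => l (j + 1) (bb b1 b2 p.1)) p Hp p2.
  rewrite -h leeNy_eq.
  by move/eqP/(uf_zero (uT _) I) => e2; have := bb_nz p.1; rewrite e2 eqxx.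
move=> v.
have Bv : B (d j v) by exists v.
have [xs [Fxs exs]] := (FFP j).2 _ Bv.
have [s1 es1] := lr Fxs.
set y := \sum_(p <- xs) p.2 *: lift p.1 in es1.
have dy : d j (v - y) = 0.
  suff h : d j y = \sum_(p <- xs) p.2 *: p.1 by rewrite linearB exs h subrr.
  rewrite /y; elim: (xs) Fxs => [|[x c] xs' IH] H; first by rewrite !big_nil linear0.
  rewrite !big_cons linearD linearZZ IH; last by move=> p Hp; apply: H; right.
  by have [e _] := liftP (FF_B (H (x, c) (or_introl erefl))).1; rewrite /= e.
have [u eu] := Hac dy.
have Bvy : B (v - y) by exists u.
have [zs [Fzs ezs]] := (FFP (j + 1)).2 _ Bvy.
have [s2 es2] := ll Fzs.
exists (s2 ++ s1); rewrite big_cat es1 es2 -ezs /y.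
by symmetry; apply: subrK.
Qed.

End Deg.

End Main.


Unset Implicit Arguments.
Theorem proposition3p13 (R : realType) (K : fieldType)
    (A : int -> lmodType K)
    (d : forall k : int, {linear A (k + 1) -> A k})
    (l : forall k : int, A k -> \bar R) :
  ascending_chain_complex d l ->
  acyclic d ->
  (forall k, best_approximation (l k)) ->
  exists (I : int -> Type)
         (x : forall k : int, I (k + 1) -> A k)
         (y : forall k : int, I k -> A k),
    (forall k : int,
       is_basis (fun ij : I (k + 1) + I k =>
                   match ij with inl i => x k i | inr j => y k j end) /\
       l_orthogonal (l k) (fun ij : I (k + 1) + I k =>
                   match ij with inl i => x k i | inr j => y k j end)) /\
    (forall (k : int) (i : I (k + 1)), d k (y (k + 1) i) = x k i).
Proof.
move=> Hcc Hac Hba.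
exists (II Hcc Hba), (fun k i => d k (sval i)), (fun k i => sval i).
split; last by [].
move=> k; have H := deg Hcc Hac Hba (k - 1).
rewrite (subrK 1 k) in H.
exact: H.
Qed.
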